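(* Let $\epsilon>0$ and consider the algorithm with exact searches: given $\theta_{k-1}\in\Theta\cap\mathbb{V}$, let $\tau_{k-1}$ be a maximizer of $\tau\mapsto DL(\theta_{k-1},V_\tau)$ over $\tau\ge0$, and $\theta_k:=\operatorname{argsup}_{\theta\in\Theta\cap\mathbb{V}_{D(\theta_{k-1})\cup\{\tau_{k-1}\}}}L(\theta)$. Let $R:=L(\theta_{k-1})$ (assumed finite), let $s_R\ge 0$ and $m_R<\beta$ be constants such that every $\varphi\in\Theta$ with $L(\varphi)\ge R$ satisfies $|\varphi(0)|\le s_R$ and $\sup_x\varphi'(x+)\le m_R$, and let $\gamma:=\int_0^\infty(x^2+x_n^2)e^{s_R+m_Rx}M(dx)$. If $\sup_\tau DL(\theta_{k-1},V_\tau)\ge\epsilon$, then \[L(\theta_k)-L(\theta_{k-1})\ge\frac{\epsilon^2}{2\gamma}.\]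
   Context: Let $f$ be a probability density on $\mathbb{R}_{\ge0}$ satisfying the standing assumptions: (A1) $f$ is continuous and $f(x)>0$ for all $x>0$; (A2) there is $\beta\in\mathbb{R}$ such that for every $\lambda\in\mathbb{R}$, $\int_0^\infty e^{\lambda x}f(x)\,dx<\infty$ if and only if $\lambda<\beta$, and $\lim_{\lambda\to\beta^-}\int_0^\infty e^{\lambda x}f(x)\,dx=\infty$; (A3) for every $\lambda\in\mathbb{R}$, $\int_0^\infty e^{\lambda x}f(x)dx<\infty$ implies $\int_0^\infty x^2e^{\lambda x}f(x)dx<\infty$. Let $M$ be the measure on $\mathbb{R}_{\ge0}$ with density $f$. Fix data $x_1\le\dots\le x_n$ in $\mathbb{R}_{\ge0}$ with empirical distribution $\hat P=\frac1n\sum_{i=1}^n\delta_{x_i}$. $\Theta$ is the set of convex non-decreasing functions $\theta:\mathbb{R}_{\ge0}\to\mathbb{R}$. For $\theta\in\Theta$, $L(\theta):=\int\theta\,d\hat P-\int e^{\theta}\,dM+1\in[-\infty,\infty)$. For $\theta\in\Theta$ and a function $v$, $DL(\theta,v):=\lim_{t\to0^+}\frac{L(\theta+tv)-L(\theta)}{t}$. $\mathbb{V}$ is the set of continuous piecewise linear functions $v:\mathbb{R}_{\ge0}\to\mathbb{R}$ with finitely many breakpoints; $D(v)=\{\tau\ge0: v'(\tau-)\neq v'(\tau+)\}$ is its set of breakpoints; for finite $S\subset\mathbb{R}_{\ge0}$, $\mathbb{V}_S=\{v\in\mathbb{V}:D(v)\subseteq S\}$. For $\tau\ge0$, $V_\tau(x):=(x-\tau)^+$.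 *)

(* Defs.v *)
From HB Require Import structures.
From mathcomp Require Import all_boot all_order all_algebra.
From mathcomp Require Import all_classical all_reals all_analysis.
Set Implicit Arguments. Unset Strict Implicit. Unset Printing Implicit Defensive.
Import Order.TTheory GRing.Theory Num.Theory.
Import numFieldNormedType.Exports.
Local Open Scope classical_set_scope.
Local Open Scope ring_scope.

Section Defs.
Variable R : realType.

(* integral w.r.t. M(dx) = f(x) dx on R_{>=0} (extended-real valued) *)
Definition Mint (f g : R -> R) : \bar R :=
  (\int[lebesgue_measure]_(y in `[0%R, +oo[%classic) (g y * f y)%:E)%E.

(* integral w.r.t. the empirical distribution of x_0, ..., x_{n-1} *)
Definition Pint (n : nat) (x : nat -> R) (g : R -> R) : R :=
  n%:R^-1 * \sum_(i < n) g (x i).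

Definition Lobj (f : R -> R) (n : nat) (x : nat -> R) (th : R -> R) : \bar R :=
  ((Pint n x th)%:E - Mint f (fun y => expR (th y)) + 1)%E.

Definition DL (f : R -> R) (n : nat) (x : nat -> R) (th v : R -> R) : \bar R :=
  lim ((fun t : R => ((Lobj f n x (fun y => (th y + t * v y)%R) - Lobj f n x th)
                       * (t^-1)%:E)%E) @ 0^'+).

Definition inTheta (th : R -> R) : Prop :=
  (forall a b t, 0 <= a -> 0 <= b -> 0 <= t <= 1 ->
     th (t * a + (1 - t) * b) <= t * th a + (1 - t) * th b) /\
  (forall a b, 0 <= a -> a <= b -> th a <= th b).

Definition rderiv (v : R -> R) (tau : R) : R :=
  lim ((fun h : R => (v (tau + h) - v tau) / h) @ 0^'+).
Definition lderiv (v : R -> R) (tau : R) : R :=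
  lim ((fun h : R => (v (tau + h) - v tau) / h) @ 0^'-).

(* V : continuous piecewise linear functions on R_{>=0} with finitely many
   breakpoints: there is a finite list of knots s such that v is affine on
   every closed interval [a,b] of R_{>=0} containing no knot in its interior *)
Definition inV (v : R -> R) : Prop :=
  {within `[0%R, +oo[%classic, continuous v} /\
  exists s : seq R, forall a b, 0 <= a -> a < b ->
    (forall c, c \in s -> ~ (a < c /\ c < b)) ->
    exists al be : R, forall y, a <= y <= b -> v y = al + be * y.

Definition breakpoints (v : R -> R) : set R :=
  [set tau | 0 < tau /\ lderiv v tau <> rderiv v tau].

Definition inVS (S : set R) (v : R -> R) : Prop :=
  inV v /\ breakpoints v `<=` S.

Definition Vtau (tau : R) : R -> R := fun y => Num.max (y - tau) 0.

End Defs.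

(* Main.v *)
Require Import Defs.
From HB Require Import structures.
From mathcomp Require Import all_boot all_order all_algebra.
From mathcomp Require Import all_classical all_reals all_analysis.
From mathcomp Require Import lra ring measurable_realfun.
Import Order.TTheory GRing.Theory Num.Theory.
Import numFieldNormedType.Exports.
Local Open Scope classical_set_scope.
Local Open Scope ring_scope.

Set Implicit Arguments. Unset Strict Implicit.

Section H1.
Variable R : realType.

Lemma knots_sep (s : seq R) (y : R) :
  exists2 d : R, 0 < d & forall c, c \in s -> c != y -> d <= `|c - y|.
Proof.
elim: s => [|c s [d d0 IH]]; first by exists 1.
case: (eqVneq c y) => [->|cy].
  by exists d => // c'; rewrite inE => /orP[/eqP->|]; [rewrite eqxx|exact: IH].
exists (Num.min d `|c - y|).
  by rewrite lt_min d0 normr_gt0 subr_eq0 cy.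
move=> c'; rewrite inE => /orP[/eqP->|c's] cy'; first by rewrite ge_min lexx orbT.
by rewrite ge_min IH.
Qed.

Lemma inV_right (phi : R -> R) (y : R) : inV phi -> 0 <= y ->
  exists2 d : R, 0 < d & exists br : R,
    forall h, 0 <= h <= d -> phi (y + h) = phi y + br * h.
Proof.
move=> [_ [s hs]] y0.
have [d d0 hd] := knots_sep s y.
have yd : y < y + d by rewrite ltrDl.
have nk : forall c, c \in s -> ~ (y < c /\ c < y + d).
  move=> c cs [yc cyd]; have := hd c cs (negbT (gt_eqF yc)).
  rewrite ger0_norm; [lra|by rewrite subr_ge0 ltW].
have [al [be hab]] := hs y (y + d) y0 yd nk.
exists d => //; exists be => h /andP[h0 hd'].
rewrite !hab; first ring.
  by apply/andP; split; lra.
by apply/andP; split; lra.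
Qed.

Lemma inV_left (phi : R -> R) (y : R) : inV phi -> 0 < y ->
  exists2 d : R, 0 < d & exists bl : R,
    forall h, 0 <= h <= d -> phi (y - h) = phi y - bl * h.
Proof.
move=> [_ [s hs]] y0.
have [d d0 hd] := knots_sep s y.
pose d' := Num.min d y.
have d'0 : 0 < d' by rewrite lt_min d0 y0.
have d'd : d' <= d by rewrite ge_min lexx.
have d'y : d' <= y by rewrite ge_min lexx orbT.
have yd : y - d' < y by rewrite ltrBlDr ltrDl.
have nk : forall c, c \in s -> ~ (y - d' < c /\ c < y).
  move=> c cs [yc cyd]; have := hd c cs (negbT (lt_eqF cyd)).
  rewrite ler0_norm; [lra|by rewrite subr_le0 ltW].
have y'0 : 0 <= y - d' by rewrite subr_ge0.
have [al [be hab]] := hs (y - d') y y'0 yd nk.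
exists d' => //; exists be => h /andP[h0 hd'].
rewrite !hab; first ring.
  by apply/andP; split; lra.
by apply/andP; split; lra.
Qed.

Lemma rderiv_affine (F : R -> R) (y d br : R) : 0 < d ->
  (forall h, 0 <= h <= d -> F (y + h) = F y + br * h) -> rderiv F y = br.
Proof.
move=> d0 hF; rewrite /rderiv; apply: cvg_lim => //.
apply: cvg_near_cst; near=> h.
have h0 : 0 < h by near: h; exact: nbhs_right_gt.
have hd : h < d by near: h; exact: nbhs_right_lt.
rewrite hF ?ltW ?hd ?andbT //; field; by rewrite gt_eqF.
Unshelve. all: end_near. Qed.

Lemma lderiv_affine (F : R -> R) (y d bl : R) : 0 < d ->
  (forall h, 0 <= h <= d -> F (y - h) = F y - bl * h) -> lderiv F y = bl.
Proof.
move=> d0 hF; rewrite /lderiv; apply: cvg_lim => //.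
apply: cvg_near_cst; near=> h.
have h0 : h < 0 by near: h; exact: nbhs_left_lt.
have hd : - d < h by near: h; apply: nbhs_left_gt; rewrite oppr_lt0.
have -> : y + h = y - (- h) by rewrite opprK.
rewrite hF; first by field; rewrite lt_eqF.
by rewrite oppr_ge0 ltW //= lerNl ltW.
Unshelve. all: end_near. Qed.

Let w (x : R) : R := (1 + x) * expR (- x) + x ^+ 2 / 2.

Let w_der (x : R) : is_derive x 1 w (x * (1 - expR (- x))).
Proof.
rewrite /w; apply: is_derive_eq.
rewrite ?scaler0 ?addr0 ?add0r -[x%:A]/(x * 1) /GRing.scale /=; by field.
Qed.

Lemma exp_taylor2 (b : R) : 0 <= b -> expR b <= 1 + b + b ^+ 2 / 2 * expR b.
Proof.
rewrite le_eqVlt => /orP[/eqP<-|b0].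
  rewrite expR0 expr0n /=; lra.
have cw : {within `[0, b], continuous w}.
  apply: continuous_subspaceT => r; apply: differentiable_continuous.
  apply/derivable1_diffP; by case: (w_der r).
have [c /[!in_itv] /= /andP[c0 cb] eq] := MVT b0 (fun x _ => w_der x) cw.
have : 0 <= w b - w 0.
  rewrite eq; apply: mulr_ge0; last by rewrite subr0 ltW.
  apply: mulr_ge0; first exact: ltW.
  by rewrite subr_ge0 expR_le1 oppr_le0 ltW.
rewrite /w oppr0 expR0 expr0n /= => h.
have h' : 0 <= (1 + b) * expR (- b) + b ^+ 2 / 2 - 1.
  by move: h; rewrite !mul0r !addr0 !mulr1.
have eb := expR_gt0 b.
rewrite -subr_ge0.
have -> : 1 + b + b ^+ 2 / 2 * expR b - expR b
   = expR b * ((1 + b) * expR (- b) + b ^+ 2 / 2 - 1).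
  rewrite expRN; field; by rewrite ?gt_eqF.
by apply: mulr_ge0; [exact: ltW| exact: h'].
Qed.
End H1.

Section H2.
Variable R : realType.

Lemma Vtau_ge0 (tau y : R) : 0 <= Vtau tau y.
Proof. by rewrite /Vtau le_max lexx orbT. Qed.

Lemma Vtau_le (tau y : R) : 0 <= tau -> 0 <= y -> Vtau tau y <= y.
Proof. by move=> t0 y0; rewrite /Vtau ge_max y0 andbT; lra. Qed.

Lemma Vtau_cont (tau : R) : continuous (Vtau tau).
Proof.
move=> y; rewrite /Vtau.
apply: (@continuous_max _ _ (fun y => y - tau) (cst 0)).
  apply: continuousB; [exact: cvg_id| exact: cvg_cst].
exact: cvg_cst.
Qed.

Definition phiT (th : R -> R) (tau t : R) : R -> R :=
  fun y => th y + t * Vtau tau y.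

Lemma phiT_Theta th tau t : inTheta th -> 0 <= t -> inTheta (phiT th tau t).
Proof.
move=> [cv mo] t0; split.
  move=> a b l a0 b0 /andP[l0 l1]; rewrite /phiT.
  have h1 := cv a b l a0 b0 (introT andP (conj l0 l1)).
  suff h2 : Vtau tau (l * a + (1 - l) * b) <=
            l * Vtau tau a + (1 - l) * Vtau tau b.
    have h3 := ler_wpM2l t0 h2.
    set A := Vtau tau _ in h2 h3 *.
    set Va := Vtau tau a in h2 h3 *; set Vb := Vtau tau b in h2 h3 *.
    have -> : l * (th a + t * Va) + (1 - l) * (th b + t * Vb) =
       (l * th a + (1 - l) * th b) + t * (l * Va + (1 - l) * Vb) by ring.
    exact: lerD.
  have ha : a - tau <= Vtau tau a by rewrite /Vtau le_max lexx.
  have hb : b - tau <= Vtau tau b by rewrite /Vtau le_max lexx.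
  have ha0 := Vtau_ge0 tau a; have hb0 := Vtau_ge0 tau b.
  have l1' : 0 <= 1 - l by rewrite subr_ge0.
  have := ler_wpM2l l0 ha; have := ler_wpM2l l1' hb.
  have := mulr_ge0 l0 ha0; have := mulr_ge0 l1' hb0.
  rewrite /Vtau ge_max => *; apply/andP; split; lra.
move=> a b a0 ab; rewrite /phiT; apply: lerD; first exact: mo.
apply: ler_wpM2l => //; rewrite /Vtau ge_max !le_max lexx orbT andbT.
by rewrite lerD2r ab.
Qed.


Lemma phiT_V th tau t : inV th -> inV (phiT th tau t).
Proof.
move=> [cth [s hs]]; split.
  have cV : {within `[0%R, +oo[%classic, continuous (fun y => t * Vtau tau y)}.
    apply: continuous_subspaceT => z.
    apply: (@continuousM _ _ (cst t) (Vtau tau)); [exact: cvg_cst| exact: Vtau_cont].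
  move=> z; exact: (continuousD (cth z) (cV z)).
exists (tau :: s) => a b a0 ab nk.
have nk' : forall c, c \in s -> ~ (a < c /\ c < b).
  by move=> c cs; apply: nk; rewrite inE cs orbT.
have [al [be hab]] := hs a b a0 ab nk'.
have nt := nk tau (mem_head _ _).
case: (leP tau a) => ta.
  exists (al - t * tau), (be + t) => z /andP[az zb].
  rewrite /phiT hab ?az ?zb // /Vtau max_l; first ring.
  by rewrite subr_ge0 (le_trans ta).
have bt : b <= tau by rewrite leNgt; apply/negP => bt; apply: nt.
exists al, be => z /andP[az zb].
rewrite /phiT hab ?az ?zb // /Vtau max_r; first ring.
by rewrite subr_le0 (le_trans zb).
Qed.

Lemma Vtau_loc (tau y : R) : y != tau -> exists c : R,
  forall h, 0 <= h <= `|y - tau| ->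
    Vtau tau (y + h) = Vtau tau y + c * h /\ Vtau tau (y - h) = Vtau tau y - c * h.
Proof.
move=> yt; case: (ltP tau y) => ty.
  exists 1 => h /andP[h0]; rewrite gtr0_norm ?subr_gt0 // => hy.
  rewrite /Vtau !max_l ?mul1r; [split; ring| | |]; lra.
exists 0 => h /andP[h0]; rewrite ler0_norm ?subr_le0 // => hy.
have yt' : y < tau by rewrite lt_neqAle yt ty.
rewrite /Vtau !max_r ?mul0r ?addr0 ?subr0; [by []| | |]; lra.
Qed.

Lemma phiT_breaks th tau t : inV th ->
  breakpoints (phiT th tau t) `<=` breakpoints th `|` [set tau].
Proof.
move=> hth y [y0 hne].
case: (eqVneq y tau) => [->|yt]; first by right.
left; split => //.
have [d1 d10 [br hr]] := inV_right hth (ltW y0).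
have [d2 d20 [bl hl]] := inV_left hth y0.
have [c hc] := Vtau_loc yt.
have d30 : 0 < `|y - tau| by rewrite normr_gt0 subr_eq0.
pose d := Num.min d1 (Num.min d2 `|y - tau|).
have d0 : 0 < d by rewrite !lt_min d10 d20 d30.
have dd1 : d <= d1 by rewrite ge_min lexx.
have dd2 : d <= d2 by rewrite !ge_min lexx orbT.
have dd3 : d <= `|y - tau| by rewrite !ge_min lexx !orbT.
have Hr : forall h, 0 <= h <= d -> th (y + h) = th y + br * h.
  by move=> h /andP[h0 hd]; apply: hr; rewrite h0 (le_trans hd).
have Hl : forall h, 0 <= h <= d -> th (y - h) = th y - bl * h.
  by move=> h /andP[h0 hd]; apply: hl; rewrite h0 (le_trans hd).
have Pr : forall h, 0 <= h <= d ->
    phiT th tau t (y + h) = phiT th tau t y + (br + t * c) * h.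
  move=> h /andP[h0 hd]; rewrite /phiT Hr ?h0 ?hd //.
  have [-> _] := hc h (introT andP (conj h0 (le_trans hd dd3))); ring.
have Pl : forall h, 0 <= h <= d ->
    phiT th tau t (y - h) = phiT th tau t y - (bl + t * c) * h.
  move=> h /andP[h0 hd]; rewrite /phiT Hl ?h0 ?hd //.
  have [_ ->] := hc h (introT andP (conj h0 (le_trans hd dd3))); ring.
move: hne; rewrite (lderiv_affine d0 Pl) (rderiv_affine d0 Pr).
rewrite (lderiv_affine d0 Hl) (rderiv_affine d0 Hr).
by move=> h1 h2; apply: h1; rewrite h2.
Qed.

Lemma slope_bound (phi : R -> R) (m : R) : inTheta phi -> inV phi ->
  (forall y, 0 <= y -> rderiv phi y <= m) ->
  forall y, 0 <= y -> phi y <= phi 0 + m * y.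
Proof.
move=> [cv _] hV hm y; rewrite le_eqVlt => /orP[/eqP<-|y0].
  by rewrite mulr0 addr0.
have [d d0 [br hr]] := inV_right hV (ltW y0).
have hb : rderiv phi y = br := rderiv_affine d0 hr.
have := hm y (ltW y0); rewrite hb => brm.
pose l := d / (y + d).
have yd0 : 0 < y + d by rewrite addr_gt0.
have l0 : 0 <= l by rewrite divr_ge0 // ltW.
have l1 : l <= 1 by rewrite ler_pdivrMr // mul1r lerDr ltW.
have := cv 0 (y + d) l (lexx 0) (ltW yd0) (introT andP (conj l0 l1)).
have -> : l * 0 + (1 - l) * (y + d) = y.
  rewrite /l; field; by rewrite gt_eqF.
rewrite (hr d); last by rewrite lexx andbT ltW.
move=> h.
have h' : (y + d) * phi y <= d * phi 0 + y * (phi y + br * d).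
  have e : (y + d) * (l * phi 0 + (1 - l) * (phi y + br * d)) =
     d * phi 0 + y * (phi y + br * d) by rewrite /l; field; rewrite gt_eqF.
  by rewrite -e ler_pM2l.
have h3 : d * (phi y - phi 0) <= d * (m * y).
  have : y * br <= y * m := ler_wpM2l (ltW y0) brm.
  move: h'; nra.
have h4 : phi y - phi 0 <= m * y by rewrite -(ler_pM2l d0).
lra.
Qed.

End H2.

Section H3.
Variable R : realType.
Variable f : R -> R.
Hypothesis f_cont : {within `[0%R, +oo[%classic, continuous f}.
Hypothesis f_pos : forall y : R, 0 < y -> 0 < f y.

Notation D := (`[0%R, +oo[%classic : set R).

Lemma inD (y : R) : D y <-> 0 <= y.
Proof. by rewrite /= in_itv /= andbT. Qed.

Lemma mD : measurable D.
Proof. exact: measurable_itv. Qed.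

Lemma f0 y : D y -> 0 <= f y.
Proof.
move=> /inD; rewrite le_eqVlt => /orP[/eqP<-|]; last by move/f_pos/ltW.
rewrite leNgt; apply/negP => fneg.
have [_ fc] := (continuous_within_itvcyP 0 f).1 f_cont.
have H := cvgr_lt (f 0) fc 0 fneg.
suff : False by [].
near (0 : R)^'+ => t.
have t0 : 0 < t by near: t; exact: nbhs_right_gt.
have ft : f t < 0 by near: t; exact: H.
by have := f_pos t0; lra.
Unshelve. all: end_near. Qed.

Lemma mf : measurable_fun D f.
Proof. exact: subspace_continuous_measurable_fun mD f_cont. Qed.

Lemma mMint (g : R -> R) : measurable_fun D g ->
  measurable_fun D (fun y => (g y * f y)%:E).
Proof. by move=> mg; apply/measurable_EFinP; apply: measurable_funM => //; exact: mf. Qed.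

Lemma Mint_ge0 (g : R -> R) : (forall y, 0 <= y -> 0 <= g y) -> (0 <= Mint f g)%E.
Proof.
move=> g0; apply: integral_ge0 => y /inD y0.
by rewrite lee_fin mulr_ge0 // ?g0 // f0 // inD.
Qed.

Lemma Mint_le (g h : R -> R) : measurable_fun D g -> measurable_fun D h ->
  (forall y, 0 <= y -> 0 <= g y <= h y) -> (Mint f g <= Mint f h)%E.
Proof.
move=> mg mh gh; apply: ge0_le_integral.
- exact: mD.
- move=> y /inD y0; have /andP[g0 _] := gh y y0.
  by rewrite lee_fin mulr_ge0 // f0 // inD.
- exact: mMint.
- exact: mMint.
- move=> y /inD y0; have /andP[_ gh'] := gh y y0.
  by rewrite lee_fin ler_wpM2r // f0 // inD.
Qed.

Lemma Mint_add (g h : R -> R) : measurable_fun D g -> measurable_fun D h ->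
  (forall y, 0 <= y -> 0 <= g y) -> (forall y, 0 <= y -> 0 <= h y) ->
  Mint f (fun y => g y + h y) = (Mint f g + Mint f h)%E.
Proof.
move=> mg mh g0 h0; rewrite /Mint.
under eq_integral do rewrite mulrDl EFinD.
apply: ge0_integralD.
- exact: mD.
- move=> y /inD y0; by rewrite lee_fin mulr_ge0 ?g0 // f0 // inD.
- exact: mMint.
- move=> y /inD y0; by rewrite lee_fin mulr_ge0 ?h0 // f0 // inD.
- exact: mMint.
Qed.

Lemma Mint_scale (k : R) (g : R -> R) : 0 <= k -> measurable_fun D g ->
  (forall y, 0 <= y -> 0 <= g y) ->
  Mint f (fun y => k * g y) = (k%:E * Mint f g)%E.
Proof.
move=> k0 mg g0; rewrite /Mint.
under eq_integral do rewrite -mulrA EFinM.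
have h0 : forall y, D y -> (0 <= (g y * f y)%:E)%E.
  move=> y /inD y0; by rewrite lee_fin mulr_ge0 ?g0 // f0 // inD.
exact: (ge0_integralZl_EFin lebesgue_measure mD h0 (mMint mg) k0).
Qed.

End H3.

Section H4.
Variable R : realType.
Variable f : R -> R.
Hypothesis f_cont : {within `[0%R, +oo[%classic, continuous f}.
Hypothesis f_pos : forall y : R, 0 < y -> 0 < f y.
Variable tau : R.
Hypothesis tau0 : 0 <= tau.

Notation D := (`[0%R, +oo[%classic : set R).
Notation V := (Vtau tau).

Lemma inV_meas (phi : R -> R) : inV phi -> measurable_fun D phi.
Proof. by move=> [c _]; exact: subspace_continuous_measurable_fun (@mD R) c. Qed.

Lemma mV : measurable_fun D V.
Proof.
exact: subspace_continuous_measurable_fun (@mD R) (continuous_subspaceT (@Vtau_cont R tau)).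
Qed.

Lemma mexp (phi : R -> R) : measurable_fun D phi -> measurable_fun D (fun y => expR (phi y)).
Proof. by move=> m; apply: measurableT_comp => //; exact: measurable_expR. Qed.

Lemma mpoly (lam : R) : measurable_fun D (fun y : R => (1 + y ^+ 2) * expR (lam * y)).
Proof.
apply: measurable_funM.
  apply: measurable_funD => //; exact: measurable_funX.
apply: mexp; exact: measurable_funM.
Qed.


Lemma mVe (phi : R -> R) : measurable_fun D phi ->
  measurable_fun D (fun y => V y * expR (phi y)).
Proof. by move=> m; apply: measurable_funM; [exact: mV|exact: mexp]. Qed.

Lemma mV2e (phi : R -> R) : measurable_fun D phi ->
  measurable_fun D (fun y => V y ^+ 2 * expR (phi y)).
Proof. by move=> m; apply: measurable_funM; [exact: measurable_funX mV|exact: mexp]. Qed.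

Lemma mphiT (phi : R -> R) s : measurable_fun D phi -> measurable_fun D (phiT phi tau s).
Proof. by move=> m; apply: measurable_funD => //; apply: measurable_funM => //; exact: mV. Qed.

Lemma taylor_up (phi : R -> R) (s : R) : measurable_fun D phi -> 0 <= s ->
  (Mint f (fun y => expR (phi y)) + s%:E * Mint f (fun y => (V y * expR (phi y))%R)
     <= Mint f (fun y => expR (phiT phi tau s y)))%E.
Proof.
move=> mphi s0.
rewrite -(Mint_scale f_cont f_pos s0 (mVe mphi)); last first.
  by move=> y _; rewrite mulr_ge0 ?Vtau_ge0 ?expR_ge0.
rewrite -(Mint_add f_cont f_pos (mexp mphi)) //; last first.
- by move=> y _; rewrite mulr_ge0 ?mulr_ge0 ?Vtau_ge0 ?expR_ge0.
- by apply: measurable_funM => //; exact: mVe.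
apply: (Mint_le f_cont f_pos).
- apply: measurable_funD; first exact: mexp.
  by apply: measurable_funM => //; exact: mVe.
- apply: mexp; exact: mphiT.
move=> y y0; apply/andP; split.
  by rewrite addr_ge0 ?expR_ge0 // mulr_ge0 ?mulr_ge0 ?Vtau_ge0 ?expR_ge0.
rewrite /phiT expRD.
have := expR_ge1Dx (s * V y).
have := expR_gt0 (phi y).
nra.
Qed.

Lemma taylor_low (phi : R -> R) (s : R) : measurable_fun D phi -> 0 <= s ->
  (Mint f (fun y => expR (phiT phi tau s y)) <=
   Mint f (fun y => expR (phi y)) + s%:E * Mint f (fun y => (V y * expR (phi y))%R)
   + (s ^+ 2 / 2)%R%:E * Mint f (fun y => (V y ^+ 2 * expR (phiT phi tau s y))%R))%E.
Proof.
move=> mphi s0.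
have s20 : 0 <= s ^+ 2 / 2 by rewrite divr_ge0 ?sqr_ge0.
rewrite -(Mint_scale f_cont f_pos s20 (mV2e (mphiT s mphi))); last first.
  by move=> y _; rewrite mulr_ge0 ?sqr_ge0 ?expR_ge0.
rewrite -(Mint_scale f_cont f_pos s0 (mVe mphi)); last first.
  by move=> y _; rewrite mulr_ge0 ?Vtau_ge0 ?expR_ge0.
rewrite -(Mint_add f_cont f_pos (mexp mphi)) //; last first.
- by move=> y _; rewrite mulr_ge0 ?mulr_ge0 ?Vtau_ge0 ?expR_ge0.
- by apply: measurable_funM => //; exact: mVe.
rewrite -(Mint_add f_cont f_pos); last 4 first.
- apply: measurable_funD; first exact: mexp.
  by apply: measurable_funM => //; exact: mVe.
- by apply: measurable_funM => //; exact: mV2e (mphiT s mphi).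
- by move=> y _; rewrite addr_ge0 ?expR_ge0 // mulr_ge0 ?mulr_ge0 ?Vtau_ge0 ?expR_ge0.
- by move=> y _; rewrite mulr_ge0 // mulr_ge0 ?sqr_ge0 ?expR_ge0.
apply: (Mint_le f_cont f_pos).
- apply: mexp; exact: mphiT.
- apply: measurable_funD; last by apply: measurable_funM => //; exact: mV2e (mphiT s mphi).
  apply: measurable_funD; first exact: mexp.
  by apply: measurable_funM => //; exact: mVe.
move=> y y0; apply/andP; split; first by rewrite expR_ge0.
rewrite /phiT expRD.
have hb : 0 <= s * V y by rewrite mulr_ge0 ?Vtau_ge0.
have := exp_taylor2 hb.
have := expR_gt0 (phi y).
set a := expR (phi y); set e := expR (s * V y).
move=> a0 h.
have : a * e <= a * (1 + s * V y + (s * V y) ^+ 2 / 2 * e) by rewrite ler_pM2l.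
move=> h'; apply: (le_trans h'); rewrite le_eqVlt; apply/orP; left; apply/eqP.
rewrite exprMn; ring.
Qed.


Variables (sR mR lam0 : R).
Hypothesis mRlam : mR <= lam0.

Definition Kint := Mint f (fun y => ((1 + y ^+ 2) * expR (lam0 * y))%R).

Let expb (a y : R) : 0 <= y -> a <= sR + lam0 * y ->
  expR a <= expR sR * expR (lam0 * y).
Proof. by move=> y0 ha; rewrite -expRD ler_expR. Qed.

Let bnd_gen (g : R -> R) : measurable_fun D g ->
  (forall y, 0 <= y -> 0 <= g y <= expR sR * ((1 + y ^+ 2) * expR (lam0 * y))) ->
  (Mint f g <= (expR sR)%:E * Kint)%E.
Proof.
move=> mg hg; rewrite /Kint -(Mint_scale f_cont f_pos (expR_ge0 sR) (mpoly lam0)); last first.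
  by move=> y _; rewrite mulr_ge0 ?expR_ge0 // addr_ge0 ?sqr_ge0.
apply: (Mint_le f_cont f_pos) => //.
by apply: measurable_funM => //; exact: mpoly.
Qed.

Lemma bound_K1 (phi : R -> R) : measurable_fun D phi ->
  (forall y, 0 <= y -> phi y <= sR + mR * y) ->
  (Mint f (fun y => expR (phi y)) <= (expR sR)%:E * Kint)%E.
Proof.
move=> mphi hphi; apply: bnd_gen; first exact: mexp.
move=> y y0; rewrite expR_ge0 /=.
have h1 : phi y <= sR + lam0 * y.
  by apply: (le_trans (hphi y y0)); rewrite lerD2l ler_wpM2r.
apply: (le_trans (expb y0 h1)); rewrite ler_pM2l ?expR_gt0 //.
by apply: ler_peMl; [exact: expR_ge0| rewrite lerDl sqr_ge0].
Qed.

Lemma bound_K2 (phi : R -> R) : measurable_fun D phi ->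
  (forall y, 0 <= y -> phi y <= sR + mR * y) ->
  (Mint f (fun y => (V y * expR (phi y))%R) <= (expR sR)%:E * Kint)%E.
Proof.
move=> mphi hphi; apply: bnd_gen; first exact: mVe.
move=> y y0; rewrite mulr_ge0 ?Vtau_ge0 ?expR_ge0 //=.
have h1 : phi y <= sR + lam0 * y.
  by apply: (le_trans (hphi y y0)); rewrite lerD2l ler_wpM2r.
have := expb y0 h1; have := expR_gt0 sR; have := expR_gt0 (lam0 * y).
have := expR_gt0 (phi y).
have := Vtau_le tau0 y0; have := Vtau_ge0 tau y.
have : y <= 1 + y ^+ 2 by rewrite -subr_ge0; have := sqr_ge0 (y - 1/2); nra.
set v := V y; set e1 := expR (phi y); set e2 := expR sR; set e3 := expR (lam0 * y).
move=> hy v0 vy e30 e20 e10 he.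
have ha : v * e1 <= y * (e2 * e3).
  by apply: ler_pM => //; exact: ltW.
apply: (le_trans ha); rewrite mulrCA ler_pM2l //.
by rewrite ler_pM2r.
Qed.

Lemma bound_K3 (phi : R -> R) (s : R) : measurable_fun D phi ->
  (forall y, 0 <= y -> phi y <= sR + mR * y) -> 0 <= s -> s <= lam0 - mR ->
  (Mint f (fun y => (V y ^+ 2 * expR (phiT phi tau s y))%R) <= (expR sR)%:E * Kint)%E.
Proof.
move=> mphi hphi s0 sl; apply: bnd_gen; first exact: mV2e (mphiT s mphi).
move=> y y0; rewrite mulr_ge0 ?sqr_ge0 ?expR_ge0 //=.
have := Vtau_le tau0 y0; have := Vtau_ge0 tau y.
set v := V y => v0 vy.
have h1 : phiT phi tau s y <= sR + lam0 * y.
  rewrite /phiT -/v; have := hphi y y0; have := ler_wpM2l s0 vy.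
  have : (lam0 - mR - s) * y >= 0 by rewrite mulr_ge0 // subr_ge0.
  lra.
have := expb y0 h1; have := expR_gt0 sR; have := expR_gt0 (lam0 * y).
set e1 := expR (phiT _ _ _ _); set e2 := expR sR; set e3 := expR (lam0 * y).
move=> e30 e20 he.
have hv : v ^+ 2 <= 1 + y ^+ 2.
  have : v ^+ 2 <= y ^+ 2 by rewrite ler_sqr // ?nnegrE.
  lra.
have ha : v ^+ 2 * e1 <= (1 + y ^+ 2) * (e2 * e3).
  by apply: ler_pM => //; [exact: sqr_ge0| exact: expR_ge0].
by apply: (le_trans ha); rewrite mulrCA.
Qed.

Lemma bound_G (phi : R -> R) (c : R) : measurable_fun D phi ->
  (forall y, 0 <= y -> phi y <= sR + mR * y) ->
  (Mint f (fun y => (V y ^+ 2 * expR (phi y))%R) <=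
   Mint f (fun y => ((y ^+ 2 + c ^+ 2) * expR (sR + mR * y))%R))%E.
Proof.
move=> mphi hphi; apply: (Mint_le f_cont f_pos); first exact: mV2e.
  apply: measurable_funM.
    by apply: measurable_funD => //; exact: measurable_funX.
  apply: mexp; apply: measurable_funD => //; exact: measurable_funM.
move=> y y0; rewrite mulr_ge0 ?sqr_ge0 ?expR_ge0 //=.
have := Vtau_le tau0 y0; have := Vtau_ge0 tau y.
set v := V y => v0 vy.
have hv : v ^+ 2 <= y ^+ 2 + c ^+ 2.
  have : v ^+ 2 <= y ^+ 2 by rewrite ler_sqr // ?nnegrE.
  have := sqr_ge0 c; lra.
apply: ler_pM => //; first exact: sqr_ge0.
by rewrite ler_expR; exact: hphi.
Qed.

End H4.

Section H5.
Variable R : realType.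
Variable f : R -> R.
Hypothesis f_cont : {within `[0%R, +oo[%classic, continuous f}.
Hypothesis f_pos : forall y : R, 0 < y -> 0 < f y.
Variable tau : R.
Hypothesis tau0 : 0 <= tau.
Variables (n : nat) (x : nat -> R).

Notation D := (`[0%R, +oo[%classic : set R).
Notation V := (Vtau tau).

Lemma Pint_phiT (th : R -> R) (t : R) :
  Pint n x (phiT th tau t) = Pint n x th + t * Pint n x V.
Proof.
rewrite /Pint /phiT big_split /= -mulr_sumr; ring.
Qed.

Lemma Pint_V_ge0 : 0 <= Pint n x V.
Proof.
rewrite /Pint mulr_ge0 ?invr_ge0 ?ler0n //.
by apply: sumr_ge0 => i _; exact: Vtau_ge0.
Qed.

Lemma Mexp_ge0 (phi : R -> R) : (0 <= Mint f (fun y => expR (phi y)))%E.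
Proof. by apply: (Mint_ge0 f_cont f_pos) => y _; exact: expR_ge0. Qed.

Lemma Lobj_fin (phi : R -> R) : (Mint f (fun y => expR (phi y)) < +oo)%E ->
  Lobj f n x phi = (Pint n x phi - fine (Mint f (fun y => expR (phi y))) + 1)%:E.
Proof.
move=> h; rewrite /Lobj -[X in (_ - X)%E]fineK; last by rewrite ge0_fin_numE // Mexp_ge0.
by rewrite -EFinB -EFinD.
Qed.

Lemma Lobj_ge_fin (phi : R -> R) (r : R) : (r%:E <= Lobj f n x phi)%E ->
  (Mint f (fun y => expR (phi y)) < +oo)%E.
Proof.
rewrite /Lobj ltey; apply: contraTN => /eqP ->.
by [].
Qed.

Lemma incr (phi : R -> R) (s e a B : R) : measurable_fun D phi -> 0 <= s ->
  Mint f (fun y => expR (phi y)) = e%:E ->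
  Mint f (fun y => (V y * expR (phi y))%R) = a%:E ->
  (Mint f (fun y => (V y ^+ 2 * expR (phiT phi tau s y))%R) <= B%:E)%E ->
  exists e1 : R, Mint f (fun y => expR (phiT phi tau s y)) = e1%:E /\
    e + s * a <= e1 /\ e1 <= e + s * a + s ^+ 2 / 2 * B.
Proof.
move=> mphi s0 he ha hB.
have up := taylor_up f_cont f_pos tau mphi s0.
have lo := taylor_low f_cont f_pos tau mphi s0.
rewrite he ha in up lo.
have s20 : 0 <= s ^+ 2 / 2 by rewrite divr_ge0 ?sqr_ge0.
have lo' : (Mint f (fun y => expR (phiT phi tau s y)) <=
             (e + s * a + s ^+ 2 / 2 * B)%:E)%E.
  apply: (le_trans lo); rewrite !EFinD !EFinM; apply: leeD2l.
  by apply: lee_wpmul2l => //; rewrite lee_fin.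
have fin : Mint f (fun y => expR (phiT phi tau s y)) \is a fin_num.
  by rewrite ge0_fin_numE ?Mexp_ge0 // (le_lt_trans lo') // ltry.
exists (fine (Mint f (fun y => expR (phiT phi tau s y)))); split.
  by rewrite fineK.
split.
  by rewrite -lee_fin fineK // EFinD EFinM.
by rewrite -lee_fin fineK.
Qed.


Lemma min_step (a b c : R) : 0 <= c ->
  Num.min a b <= Num.min (a + c) b <= Num.min a b + c.
Proof.
move=> c0; case: (leP a b) => ab; case: (leP (a + c) b) => acb;
  apply/andP; split; lra.
Qed.

End H5.

Unset Implicit Arguments. Set Strict Implicit.

Theorem mainTheorem2 (R : realType) (f : R -> R) (beta : R)
  (* (A1) *)
  (f_cont : {within `[0%R, +oo[%classic, continuous f})
  (f_pos : forall y : R, 0 < y -> 0 < f y)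
  (* f is a probability density on R_{>=0} *)
  (f_prob : Mint f (fun _ => 1) = 1%E)
  (* (A2) *)
  (A2a : forall lam : R, (Mint f (fun y => expR (lam * y)%R) < +oo)%E <-> lam < beta)
  (A2b : (fun lam : R => Mint f (fun y => expR (lam * y))) @ beta^'- --> +oo%E)
  (* (A3) *)
  (A3 : forall lam : R, (Mint f (fun y => expR (lam * y)%R) < +oo)%E ->
          (Mint f (fun y => (y ^+ 2 * expR (lam * y))%R) < +oo)%E)
  (* data x_1 <= ... <= x_n in R_{>=0}, stored as x 0, ..., x (n-1) *)
  (n : nat) (x : nat -> R) (n_gt0 : (0 < n)%N)
  (x_ge0 : forall i, (i < n)%N -> 0 <= x i)
  (x_sorted : forall i j, (i <= j)%N -> (j < n)%N -> x i <= x j)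
  (eps : R) (eps_gt0 : 0 < eps)
  (* one step of the algorithm with exact searches *)
  (th_prev : R -> R) (th_prev_Theta : inTheta th_prev) (th_prev_V : inV th_prev)
  (tau : R) (tau_ge0 : 0 <= tau)
  (tau_max : forall t : R, 0 <= t ->
     (DL f n x th_prev (Vtau t) <= DL f n x th_prev (Vtau tau))%E)
  (th_next : R -> R) (th_next_Theta : inTheta th_next)
  (th_next_V : inVS (breakpoints th_prev `|` [set tau]) th_next)
  (th_next_max : forall th : R -> R, inTheta th ->
     inVS (breakpoints th_prev `|` [set tau]) th ->
     (Lobj f n x th <= Lobj f n x th_next)%E)
  (* R := L(theta_{k-1}) finite *)
  (r : R) (hr : Lobj f n x th_prev = r%:E)
  (sR mR : R) (sR_ge0 : 0 <= sR) (mR_lt : mR < beta)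
  (hsm : forall phi : R -> R, inTheta phi -> (r%:E <= Lobj f n x phi)%E ->
     `|phi 0| <= sR /\ (forall y : R, 0 <= y -> rderiv phi y <= mR))
  (hsup : (eps%:E <= ereal_sup [set DL f n x th_prev (Vtau t) | t in [set t : R | (0 <= t)%R]])%E) :
  let gamma := Mint f (fun y => ((y ^+ 2 + x n.-1 ^+ 2) * expR (sR + mR * y))%R) in
  ((eps ^+ 2 / (2 * fine gamma))%R%:E <= Lobj f n x th_next - Lobj f n x th_prev)%E.
Proof.
cbv zeta.
set gamma := Mint f (fun y => (_ * expR (sR + mR * y))%R).
set th := th_prev.
have hth : Lobj f n x th = r%:E := hr.
have good : forall phi, inTheta phi -> inV phi -> (r%:E <= Lobj f n x phi)%E ->
    forall y, 0 <= y -> phi y <= sR + mR * y.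
  move=> phi hT hV hL y y0.
  have [h0 hd] := hsm phi hT hL.
  have := slope_bound hT hV hd y0.
  have : phi 0 <= sR by apply: le_trans (ler_norm _) h0.
  lra.
have thgood : forall y, 0 <= y -> th y <= sR + mR * y.
  by apply: good => //; rewrite hth.
have mth := inV_meas th_prev_V.
have next_ge : forall t, 0 <= t ->
    (Lobj f n x (phiT th tau t) <= Lobj f n x th_next)%E.
  move=> t t0; apply: th_next_max; first exact: phiT_Theta.
  split; first exact: phiT_V.
  exact: phiT_breaks.
have phiT0 : phiT th tau 0 = th by apply/funext => y; rewrite /phiT mul0r addr0.
have next_ge0 : (r%:E <= Lobj f n x th_next)%E.
  by rewrite -hth -[in X in (Lobj _ _ _ X <= _)%E]phiT0; apply: next_ge.
have g0 : (0 <= gamma)%E.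
  apply: (Mint_ge0 f_cont f_pos) => y y0.
  by rewrite mulr_ge0 ?expR_ge0 // addr_ge0 ?sqr_ge0.
case: (leP (fine gamma) 0) => gpos.
  apply: (@le_trans _ _ 0%E).
    rewrite lee_fin mulr_ge0_le0 ?sqr_ge0 // invr_le0 mulr_ge0_le0 //.
  by rewrite hth sube_ge0.
set g := fine gamma in gpos *.
have gfin : gamma \is a fin_num.
  rewrite ge0_fin_numE // ltey; apply/negP => /eqP gE.
  by move: gpos; rewrite /g gE /= ltxx.
have gE : gamma = g%:E by rewrite /g fineK.
clearbody g.
pose lam0 := (mR + beta) / 2.
have mRlam : mR <= lam0 by rewrite /lam0; lra.
have lamb : lam0 < beta by rewrite /lam0; lra.
pose s0 := lam0 - mR.
have s0pos : 0 < s0 by rewrite /s0 /lam0; lra.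
have Kfin : (Kint f lam0 < +oo)%E.
  rewrite /Kint.
  have -> : (fun y => ((1 + y ^+ 2) * expR (lam0 * y))%R) =
            (fun y => (expR (lam0 * y) + y ^+ 2 * expR (lam0 * y))%R).
    by apply/funext => y; rewrite mulrDl mul1r.
  rewrite (Mint_add f_cont f_pos); first last.
  - by move=> y _; rewrite mulr_ge0 ?sqr_ge0 ?expR_ge0.
  - by move=> y _; rewrite expR_ge0.
  - apply: measurable_funM; first exact: measurable_funX.
    by apply: mexp; exact: measurable_funM.
  - by apply: mexp; exact: measurable_funM.
  have h1 := (A2a lam0).2 lamb.
  have h2 := A3 lam0 h1.
  apply: lte_add_pinfty => //.
have K0' : (0 <= Kint f lam0)%E.
  apply: (Mint_ge0 f_cont f_pos) => y _.
  by rewrite mulr_ge0 ?expR_ge0 // addr_ge0 ?sqr_ge0.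
pose K := expR sR * fine (Kint f lam0).
have K0 : 0 <= K by apply: mulr_ge0; [exact: expR_ge0| exact: fine_ge0].
have Kf : Kint f lam0 \is a fin_num by rewrite ge0_fin_numE.
have KE : ((expR sR)%:E * Kint f lam0)%E = K%:E.
  by rewrite /K EFinM (fineK Kf).
clearbody K.
have E0le := bound_K1 f_cont f_pos mRlam mth thgood.
rewrite KE in E0le.
have E0fin : Mint f (fun y => expR (th y)) \is a fin_num.
  by rewrite ge0_fin_numE ?Mexp_ge0 // (le_lt_trans E0le) // ltry.
set e0 := fine (Mint f (fun y => expR (th y))).
have E0e : Mint f (fun y => expR (th y)) = e0%:E by rewrite /e0 fineK.
clearbody e0.
have A0le := bound_K2 f_cont f_pos tau_ge0 mRlam mth thgood.
rewrite KE in A0le.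
have A0ge : (0 <= Mint f (fun y => (Vtau tau y * expR (th y))%R))%E.
  apply: (Mint_ge0 f_cont f_pos) => y _.
  by rewrite mulr_ge0 ?expR_ge0 ?Vtau_ge0.
have A0fin : Mint f (fun y => (Vtau tau y * expR (th y))%R) \is a fin_num.
  by rewrite ge0_fin_numE // (le_lt_trans A0le) // ltry.
set a0 := fine (Mint f (fun y => (Vtau tau y * expR (th y))%R)).
have A0e : Mint f (fun y => (Vtau tau y * expR (th y))%R) = a0%:E by rewrite /a0 fineK.
clearbody a0.
have a0K : a0 <= K by rewrite -lee_fin -A0e.
have a00 : 0 <= a0 by rewrite -lee_fin -A0e.
set PV := Pint n x (Vtau tau).
have PV0 : 0 <= PV := Pint_V_ge0 tau n x.
have rE : r = Pint n x th - e0 + 1.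
  apply/eqP; rewrite -eqe; apply/eqP.
  by rewrite -hth /Lobj E0e -EFinB -EFinD.
set D0 := PV - a0.
have D0E : D0 = PV - a0 by [].
have Lphi : forall t e1, Mint f (fun y => expR (phiT th tau t y)) = e1%:E ->
    Lobj f n x (phiT th tau t) = (Pint n x th + t * PV - e1 + 1)%:E.
  by move=> t e1 h; rewrite /Lobj h Pint_phiT -EFinB -EFinD.
clearbody D0 PV.
have qbnd : forall s, 0 <= s -> s <= s0 -> exists e1,
    Mint f (fun y => expR (phiT th tau s y)) = e1%:E /\
    e0 + s * a0 <= e1 /\ e1 <= e0 + s * a0 + s ^+ 2 / 2 * K.
  move=> s sp ss0.
  apply: (incr f_cont f_pos mth sp E0e A0e).
  by rewrite -KE; apply: (bound_K3 f_cont f_pos tau_ge0 mth thgood sp ss0).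
have cvgq : ((fun s => (Lobj f n x (phiT th tau s) - Lobj f n x th) * (s^-1)%:E)%E
              @ 0^'+ --> D0%:E).
  apply/fine_cvgP; split.
    near=> s.
    have sp : 0 < s by near: s; exact: nbhs_right_gt.
    have ss0 : s < s0 by near: s; exact: nbhs_right_lt.
    have [e1 [he1 _]] := qbnd s (ltW sp) (ltW ss0).
    by rewrite (Lphi s e1 he1) hth -EFinB -EFinM.
  apply: (@squeeze_cvgr _ _ _ _ (fun s => D0 - s * (K / 2)) (fun _ => D0)).
  - near=> s.
    have sp : 0 < s by near: s; exact: nbhs_right_gt.
    have ss0 : s < s0 by near: s; exact: nbhs_right_lt.
    have [e1 [he1 [hlo hup]]] := qbnd s (ltW sp) (ltW ss0).
    rewrite /= (Lphi s e1 he1) hth -EFinB -EFinM /=.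
    rewrite ler_pdivlMr // ler_pdivrMr //.
    apply/andP; split.
      have : s * (s * (K / 2)) = s ^+ 2 / 2 * K by ring.
      rewrite D0E rE; nra.
    rewrite D0E rE; nra.
  - have cl : (fun s : R => D0 - s * (K / 2)) @ 0 --> (D0 - 0 * (K / 2)).
      apply: cvgB; first exact: cvg_cst.
      apply: cvgMl; exact: cvg_id.
    by move: (cvg_at_right_filter cl); rewrite mul0r subr0.
  - exact: cvg_cst.
have DLe : DL f n x th (Vtau tau) = D0%:E.
  rewrite /DL; exact: (cvg_lim _ cvgq).
have epsD0 : eps <= D0.
  rewrite -lee_fin -DLe; apply: (le_trans hsup); apply: ge_ereal_sup.
  by move=> _ [t t0 <-]; exact: tau_max.
have quad : forall t, 0 <= t -> (r%:E <= Lobj f n x (phiT th tau t))%E ->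
    ((r + t * D0 - t ^+ 2 / 2 * g)%:E <= Lobj f n x (phiT th tau t))%E.
  move=> t t0 hL.
  have hg := good _ (phiT_Theta tau th_prev_Theta t0) (phiT_V tau t th_prev_V) hL.
  have hG := bound_G f_cont f_pos tau_ge0 (x n.-1) (mphiT tau t mth) hg.
  rewrite -/gamma gE in hG.
  have [e1 [he1 [_ hup]]] := incr f_cont f_pos mth t0 E0e A0e hG.
  rewrite (Lphi t e1 he1) lee_fin rE D0E.
  lra.
have step : forall t s, 0 <= t -> 0 <= s -> s <= s0 ->
    (r%:E <= Lobj f n x (phiT th tau t))%E ->
    exists lt, Lobj f n x (phiT th tau t) = lt%:E /\
      ((lt - s * K - s ^+ 2 / 2 * K)%:E <= Lobj f n x (phiT th tau (t + s)))%E.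
  move=> t s t0 sp ss0 hL.
  have hg := good _ (phiT_Theta tau th_prev_Theta t0) (phiT_V tau t th_prev_V) hL.
  have mt := mphiT tau t mth.
  have Efin := Lobj_ge_fin hL.
  set et := fine (Mint f (fun y => expR (phiT th tau t y))).
  have Ete : Mint f (fun y => expR (phiT th tau t y)) = et%:E.
    by rewrite /et fineK // ge0_fin_numE ?Mexp_ge0.
  clearbody et.
  have Ale := bound_K2 f_cont f_pos tau_ge0 mRlam mt hg.
  rewrite KE in Ale.
  have Age : (0 <= Mint f (fun y => (Vtau tau y * expR (phiT th tau t y))%R))%E.
    apply: (Mint_ge0 f_cont f_pos) => y _.
    by rewrite mulr_ge0 ?expR_ge0 ?Vtau_ge0.
  set at_ := fine (Mint f (fun y => (Vtau tau y * expR (phiT th tau t y))%R)).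
  have Ate : Mint f (fun y => (Vtau tau y * expR (phiT th tau t y))%R) = at_%:E.
    have Af : Mint f (fun y => (Vtau tau y * expR (phiT th tau t y))%R) \is a fin_num.
      by rewrite ge0_fin_numE // (le_lt_trans Ale) ?ltry.
    by rewrite /at_ (fineK Af).
  clearbody at_.
  have atK : at_ <= K by rewrite -lee_fin -Ate.
  have hB := bound_K3 f_cont f_pos tau_ge0 mt hg sp ss0.
  rewrite KE in hB.
  have [e1 [he1 [_ hup]]] := incr f_cont f_pos mt sp Ete Ate hB.
  have pp : phiT (phiT th tau t) tau s = phiT th tau (t + s).
    by apply/funext => y; rewrite /phiT mulrDl addrA.
  rewrite pp in he1.
  exists (Pint n x th + t * PV - et + 1); split; first exact: Lphi.
  rewrite (Lphi _ e1 he1) lee_fin.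
  have : s * at_ <= s * K by rewrite ler_wpM2l.
  have : 0 <= s * PV by rewrite mulr_ge0.
  lra.
pose T := eps / g.
have TE : T = eps / g by [].
have T0 : 0 < T by rewrite TE; exact: divr_gt0 eps_gt0 gpos.
clearbody T.
pose t1 := Num.min T (Num.min s0 (eps / (K + 1))).
have K1 : 0 < K + 1 by lra.
have t10 : 0 < t1 by rewrite !lt_min T0 s0pos divr_gt0.
have t1T : t1 <= T by rewrite ge_min lexx.
have t1s0 : t1 <= s0 by rewrite !ge_min lexx orbT.
have t1K : t1 * (K + 1) <= eps.
  by rewrite -ler_pdivlMr // !ge_min lexx !orbT.
clearbody t1.
pose eta := t1 * eps / 2.
have etaE : eta = t1 * eps / 2 by [].
have eta0 : 0 < eta by rewrite etaE divr_gt0 // mulr_gt0.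
clearbody eta.
have hL1 : (r%:E <= Lobj f n x (phiT th tau t1))%E.
  have [e1 [he1 [_ hup]]] := qbnd t1 (ltW t10) t1s0.
  rewrite (Lphi t1 e1 he1) lee_fin rE.
  have h1 : t1 * eps <= t1 * D0 by rewrite ler_wpM2l // ltW.
  have h2 : t1 * (t1 * K) <= t1 * eps.
    by rewrite ler_wpM2l ?ltW //; lra.
  have h3 : t1 * (PV - a0) = t1 * PV - t1 * a0 by ring.
  have h4 : t1 ^+ 2 / 2 * K = t1 * (t1 * K) / 2 by ring.
  have h5 : 0 < t1 * eps by rewrite mulr_gt0.
  rewrite D0E in h1; lra.
have mid : forall t, t1 <= t -> t <= T -> (r%:E <= Lobj f n x (phiT th tau t))%E ->
    ((r + eta)%:E <= Lobj f n x (phiT th tau t))%E.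
  move=> t t1t tT hL.
  have t0 : 0 <= t by apply: le_trans (ltW t10) t1t.
  apply: le_trans (quad t t0 hL); rewrite lee_fin.
  have h1 : t * g <= eps by rewrite -ler_pdivlMr // -TE.
  have h2 : t * eps <= t * D0 by rewrite ler_wpM2l.
  have h3 : t * (t * g) <= t * eps by rewrite ler_wpM2l.
  have h4 : t1 * eps <= t * eps by rewrite ler_wpM2r // ltW.
  have h5 : t ^+ 2 / 2 * g = t * (t * g) / 2 by ring.
  rewrite etaE; lra.
pose sig := Num.min s0 (Num.min 1 (eta / (2 * K + 1))).
have sig0 : 0 < sig by rewrite !lt_min s0pos ltr01 divr_gt0 //; lra.
have sigs0 : sig <= s0 by rewrite ge_min lexx.
have sig1 : sig <= 1 by rewrite !ge_min lexx !orbT.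
have sigeta : sig * (2 * K + 1) <= eta.
  by rewrite -ler_pdivlMr ?ge_min ?lexx ?orbT //; lra.
clearbody sig.
pose u (k : nat) := Num.min (t1 + k%:R * sig) T.
have u_t1 : forall k, t1 <= u k.
  by move=> k; rewrite /u le_min t1T andbT lerDl mulr_ge0 // ltW.
have u_T : forall k, u k <= T.
  move=> k; by rewrite /u ge_min lexx orbT.
have u_step : forall k, u k <= u k.+1 <= u k + sig.
  move=> k; rewrite /u -[k.+1]addn1 natrD mulrDl mul1r addrA.
  exact: min_step (ltW sig0).
have allk : forall k, (r%:E <= Lobj f n x (phiT th tau (u k)))%E.
  elim=> [|k IH].
    by rewrite /u mul0r addr0 (min_l t1T).
  have /andP[uk1 uk2] := u_step k.
  have ds0 : 0 <= u k.+1 - u k by rewrite subr_ge0.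
  have dsig : u k.+1 - u k <= sig by lra.
  have uk0 : 0 <= u k by apply: le_trans (ltW t10) (u_t1 k).
  have [lt [hlt hst]] := step (u k) (u k.+1 - u k) uk0 ds0 (le_trans dsig sigs0) IH.
  rewrite subrKC in hst.
  have := mid (u k) (u_t1 k) (u_T k) IH; rewrite hlt lee_fin => hm.
  apply: le_trans hst; rewrite lee_fin.
  set d := u k.+1 - u k in ds0 dsig *.
  have h1 : d * d <= d * 1 by rewrite ler_wpM2l // (le_trans dsig).
  have h2 : d * (2 * K + 1) <= eta.
    by apply: le_trans sigeta; rewrite ler_wpM2r // addr_ge0 ?mulr_ge0.
  have h3 : d * d * K <= d * K.
    have : 0 <= (d - d * d) * K by apply: mulr_ge0 => //; lra.
    lra.
  have h4 : d * (2 * K + 1) = 2 * (d * K) + d by ring.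
  have h5 : d ^+ 2 / 2 * K = d * d * K / 2 by ring.
  have h6 : 0 <= d * K by rewrite mulr_ge0.
  lra.
have [k hk] : exists k : nat, (T - t1) / sig < k%:R.
  exists (Num.Def.archi_bound ((T - t1) / sig)); apply: archi_boundP.
  by rewrite divr_ge0 ?subr_ge0 // ltW.
have ukT : u k = T.
  rewrite /u min_r //.
  by move: hk; rewrite ltr_pdivrMr //; lra.
have hLT := allk k; rewrite ukT in hLT.
have fin := quad T (ltW T0) hLT.
have tn := next_ge T (ltW T0).
have rf : (r%:E : \bar R) \is a fin_num by [].
rewrite hth (leeBrDr _ _ rf) -EFinD.
apply: le_trans tn; apply: le_trans fin; rewrite lee_fin.
have h2 : T * eps <= T * D0 by rewrite ler_wpM2l // ltW.
have h3 : T * eps = eps ^+ 2 / g by rewrite TE; field; rewrite gt_eqF.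
have h4 : T ^+ 2 / 2 * g = eps ^+ 2 / (2 * g) by rewrite TE; field; rewrite gt_eqF.
have h5 : eps ^+ 2 / g = 2 * (eps ^+ 2 / (2 * g)) by field; rewrite gt_eqF.
lra.
Unshelve. all: end_near. Qed.
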